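(* Let $\mathfrak l$ be a Lie algebra and let $S_1,S_2$ be subspaces of $\mathfrak l$ with $[S_1,S_2]\subseteq S_1+S_2$. For $i=1,2$ let $\mathfrak s_i$ be the subalgebra of $\mathfrak l$ generated by $S_i$. Then $[\mathfrak s_1,\mathfrak s_2]\subseteq\mathfrak s_1+\mathfrak s_2$; in particular $\mathfrak s_1+\mathfrak s_2$ is a subalgebra of $\mathfrak l$. *)

(* Defs.v *)
(* Subspaces are
   (possibly infinite-dimensional) predicates on V. *)
From mathcomp Require Import all_boot all_algebra.
Set Implicit Arguments. Unset Strict Implicit. Unset Printing Implicit Defensive.
Import GRing.Theory.
Local Open Scope ring_scope.

Section Lie.
Variables (K : fieldType) (V : lmodType K).

Definition is_lie_bracket (br : V -> V -> V) : Prop :=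
  [/\ (forall a x y z, br (a *: x + y) z = a *: br x z + br y z),
      (forall a x y z, br z (a *: x + y) = a *: br z x + br z y),
      (forall x, br x x = 0) &
      (forall x y z, br x (br y z) + br y (br z x) + br z (br x y) = 0)].

Definition is_subspace (S : V -> Prop) : Prop :=
  [/\ S 0, (forall x y, S x -> S y -> S (x + y)) &
      (forall (a : K) x, S x -> S (a *: x))].

Definition sub_set (A B : V -> Prop) : Prop := forall x, A x -> B x.

Definition span (A : V -> Prop) : V -> Prop :=
  fun x => forall S, is_subspace S -> sub_set A S -> S x.

Definition sum_sp (S1 S2 : V -> Prop) : V -> Prop :=
  fun x => exists y z, [/\ S1 y, S2 z & x = y + z].

Definition bracket_sp (br : V -> V -> V) (A B : V -> Prop) : V -> Prop :=
  span (fun x => exists a b, [/\ A a, B b & x = br a b]).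

Definition is_subalgebra (br : V -> V -> V) (S : V -> Prop) : Prop :=
  is_subspace S /\ (forall x y, S x -> S y -> S (br x y)).

Definition gen_subalg (br : V -> V -> V) (A : V -> Prop) : V -> Prop :=
  fun x => forall S, is_subalgebra br S -> sub_set A S -> S x.

End Lie.

(* Main.v *)
Require Import Defs.
From mathcomp Require Import all_boot all_algebra.
Set Implicit Arguments. Unset Strict Implicit. Unset Printing Implicit Defensive.
Import GRing.Theory.
Local Open Scope ring_scope.

Section H.
Variables (K : fieldType) (V : lmodType K).

Lemma sp0 (S : V -> Prop) : is_subspace S -> S 0.
Proof. by case. Qed.
Lemma spD (S : V -> Prop) x y : is_subspace S -> S x -> S y -> S (x + y).
Proof. by case=> _ h _; apply: h. Qed.
Lemma spZ (S : V -> Prop) a x : is_subspace S -> S x -> S (a *: x).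
Proof. by case=> _ _ h; apply: h. Qed.
Lemma spN (S : V -> Prop) x : is_subspace S -> S x -> S (- x).
Proof. by move=> hS hx; rewrite -scaleN1r; apply: spZ. Qed.

Lemma sum_sub (A B : V -> Prop) : is_subspace A -> is_subspace B ->
  is_subspace (sum_sp A B).
Proof.
move=> hA hB; split.
- by exists 0, 0; rewrite addr0; split=> //; apply: sp0.
- move=> x y [a [b [Ha Hb ->]]] [c [d [Hc Hd ->]]].
  exists (a + c), (b + d); split; [exact: spD|exact: spD|by rewrite addrACA].
- move=> k x [a [b [Ha Hb ->]]]; exists (k *: a), (k *: b).
  by split; [exact: spZ|exact: spZ|rewrite scalerDr].
Qed.

Lemma sum_l (A B : V -> Prop) x : is_subspace B -> A x -> sum_sp A B x.
Proof. by move=> hB hx; exists x, 0; rewrite addr0; split=> //; apply: sp0. Qed.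
Lemma sum_r (A B : V -> Prop) x : is_subspace A -> B x -> sum_sp A B x.
Proof. by move=> hA hx; exists 0, x; rewrite add0r; split=> //; apply: sp0. Qed.

Lemma span_min (A S : V -> Prop) : is_subspace S -> sub_set A S -> sub_set (Defs.span A) S.
Proof. by move=> hS hA x hx; apply: hx. Qed.

Variable br : V -> V -> V.
Hypothesis hlie : is_lie_bracket br.

Lemma gen_incl (A : V -> Prop) : sub_set A (gen_subalg br A).
Proof. by move=> x hx S _ hS; apply: hS. Qed.
Lemma gen_min (A P : V -> Prop) : is_subalgebra br P -> sub_set A P ->
  sub_set (gen_subalg br A) P.
Proof. by move=> hP hA x hx; apply: hx. Qed.
Lemma gen_sa (A : V -> Prop) : is_subalgebra br (gen_subalg br A).
Proof.
split; first split.
- by move=> S [hS _] _; apply: sp0.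
- move=> x y hx hy S hSa hA; case: (hSa) => hS _; exact: spD hS (hx S hSa hA) (hy S hSa hA).
- move=> a x hx S hSa hA; case: (hSa) => hS _; exact: spZ hS (hx S hSa hA).
- by move=> x y hx hy S hSa hA; case: (hSa) => _ h; apply: h; [apply: hx|apply: hy].
Qed.

Lemma brDl x y z : br (x + y) z = br x z + br y z.
Proof. by case: hlie => h1 _ _ _; rewrite -[x]scale1r h1 !scale1r. Qed.
Lemma brDr x y z : br z (x + y) = br z x + br z y.
Proof. by case: hlie => _ h2 _ _; rewrite -[x]scale1r h2 !scale1r. Qed.
Lemma br0l z : br 0 z = 0.
Proof.
have e := brDl 0 0 z; rewrite addr0 in e.
by apply: (addrI (br 0 z)); rewrite addr0 -e.
Qed.
Lemma br0r z : br z 0 = 0.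
Proof.
have e := brDr 0 0 z; rewrite addr0 in e.
by apply: (addrI (br z 0)); rewrite addr0 -e.
Qed.
Lemma brZl a x z : br (a *: x) z = a *: br x z.
Proof. by case: hlie => h1 _ _ _; rewrite -[a *: x]addr0 h1 br0l addr0. Qed.
Lemma brZr a x z : br z (a *: x) = a *: br z x.
Proof. by case: hlie => _ h2 _ _; rewrite -[a *: x]addr0 h2 br0r addr0. Qed.
Lemma anti x y : br x y = - br y x.
Proof.
case: hlie => _ _ h3 _.
have := h3 (x + y); rewrite brDl !brDr !h3 add0r addr0 => /eqP.
by rewrite addr_eq0 => /eqP.
Qed.
Lemma brNr x z : br z (- x) = - br z x.
Proof. by rewrite -scaleN1r brZr scaleN1r. Qed.
Lemma jac x y z : br (br x y) z = br x (br y z) + br y (br z x).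
Proof.
case: hlie => _ _ _ h4.
have := h4 x y z => /eqP; rewrite addr_eq0 => /eqP ->.
by rewrite [br z _]anti opprK.
Qed.

End H.

Theorem lemma1p4 (K : fieldType) (V : lmodType K) (br : V -> V -> V)
  (hlie : is_lie_bracket br) (S1 S2 : V -> Prop)
  (hS1 : is_subspace S1) (hS2 : is_subspace S2)
  (hS12 : sub_set (bracket_sp br S1 S2) (sum_sp S1 S2)) :
  sub_set (bracket_sp br (gen_subalg br S1) (gen_subalg br S2))
         (sum_sp (gen_subalg br S1) (gen_subalg br S2))
  /\ is_subalgebra br (sum_sp (gen_subalg br S1) (gen_subalg br S2)).
Proof.
set s1 := gen_subalg br S1; set s2 := gen_subalg br S2.
have [ss1 cl1] : is_subalgebra br s1 by apply: gen_sa.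
have [ss2 cl2] : is_subalgebra br s2 by apply: gen_sa.
have i1 : sub_set S1 s1 by apply: gen_incl.
have i2 : sub_set S2 s2 by apply: gen_incl.
have sT1 : is_subspace (sum_sp s1 S2) by apply: sum_sub.
have sT : is_subspace (sum_sp s1 s2) by apply: sum_sub.
pose P x := s1 x /\ forall z, S2 z -> sum_sp s1 S2 (br x z).
have PS1 : sub_set S1 P.
  move=> x hx; split; first exact: i1.
  move=> z hz; have [a [b [ha hb ->]]] : sum_sp S1 S2 (br x z).
    by apply: hS12 => S hS hA; apply: hA; exists x, z.
  by exists a, b; split=> //; apply: i1.
have Psa : is_subalgebra br P.
  split; first split.
  - by split; [apply: sp0|move=> z _; rewrite (br0l hlie); apply: sp0].
  - move=> x y [hx Hx] [hy Hy]; split; first exact: spD ss1 hx hy.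
    by move=> z hz; rewrite (brDl hlie); apply: spD; [|apply: Hx|apply: Hy].
  - move=> a x [hx Hx]; split; first exact: spZ ss1 hx.
    by move=> z hz; rewrite (brZl hlie); apply: spZ; [|apply: Hx].
  - move=> x y [hx Hx] [hy Hy]; split; first exact: cl1.
    move=> z hz; rewrite (jac hlie); apply: spD => //.
    + have [a [b [ha hb ->]]] := Hy z hz.
      rewrite (brDr hlie); apply: spD => //; first by apply: sum_l => //; apply: cl1.
      by apply: Hx.
    + rewrite [br z x](anti hlie) (brNr hlie); apply: spN => //.
      have [a [b [ha hb ->]]] := Hx z hz.
      rewrite (brDr hlie); apply: spD => //; first by apply: sum_l => //; apply: cl1.
      by apply: Hy.
have step1 x z : s1 x -> S2 z -> sum_sp s1 S2 (br x z).
  by move=> hx hz; have [_ H] := gen_min Psa PS1 hx; apply: H.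
have T12 : sub_set (sum_sp s1 S2) (sum_sp s1 s2).
  by move=> u [a [b [ha hb ->]]]; exists a, b; split=> //; apply: i2.
pose Q z := s2 z /\ forall x, s1 x -> sum_sp s1 s2 (br x z).
have QS2 : sub_set S2 Q.
  by move=> z hz; split; [apply: i2|move=> x hx; apply: T12; apply: step1].
have Qsa : is_subalgebra br Q.
  split; first split.
  - by split; [apply: sp0|move=> x _; rewrite (br0r hlie); apply: sp0].
  - move=> x y [hx Hx] [hy Hy]; split; first exact: spD ss2 hx hy.
    by move=> z hz; rewrite (brDr hlie); apply: spD; [|apply: Hx|apply: Hy].
  - move=> a x [hx Hx]; split; first exact: spZ ss2 hx.
    by move=> z hz; rewrite (brZr hlie); apply: spZ; [|apply: Hx].
  - move=> z w [hz Hz] [hw Hw]; split; first exact: cl2.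
    move=> x hx; rewrite (anti hlie) (jac hlie); apply: spN => //; apply: spD => //.
    + rewrite [br w x](anti hlie) (brNr hlie); apply: spN => //.
      have [a [b [ha hb ->]]] := Hw x hx.
      rewrite (brDr hlie); apply: spD => //; last by apply: sum_r => //; apply: cl2.
      by rewrite (anti hlie); apply: spN => //; apply: Hz.
    + have [a [b [ha hb ->]]] := Hz x hx.
      rewrite (brDr hlie); apply: spD => //; last by apply: sum_r => //; apply: cl2.
      by rewrite (anti hlie); apply: spN => //; apply: Hw.
have step2 x z : s1 x -> s2 z -> sum_sp s1 s2 (br x z).
  by move=> hx hz; have [_ H] := gen_min Qsa QS2 hz; apply: H.
split.
  by apply: span_min => // u [a [b [ha hb ->]]]; apply: step2.
split=> // x y [a [b [ha hb ->]]] [c [d [hc hd ->]]].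
rewrite !(brDl hlie) !(brDr hlie); apply: spD => //; apply: spD => //.
- by apply: sum_l => //; apply: cl1.
- by apply: step2.
- by rewrite (anti hlie); apply: spN => //; apply: step2.
- by apply: sum_r => //; apply: cl2.
Qed.
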